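(* Let $q$ be a power of $2$, $\beta$ a primitive element of $\mathbb{F}_{q^2}$, $\mathrm{Tr}(x)=x+x^q$, and $\Psi:\mathbb{F}_{q^2}^n\to\mathbb{F}_q^{2n}$, $\Psi(\alpha_0,\ldots,\alpha_{n-1})=\left(\mathrm{Tr}(\beta\alpha_0),\ldots,\mathrm{Tr}(\beta\alpha_{n-1}),\mathrm{Tr}(\beta^q\alpha_0),\ldots,\mathrm{Tr}(\beta^q\alpha_{n-1})\right)$. Let $g(x)\in\mathbb{F}_q[x]$ be a monic divisor of $x^{2n}-1$ with $g(x)\neq x^{2n}-1$ and $k=\deg g$, $\mathscr{D}=\langle g(x)\rangle$ the $q$-ary linear cyclic code of length $2n$ it generates, and $\mathscr{C}=\Psi^{-1}(\mathscr{D})$. Let $h(x)=(x^{2n}-1)/g(x)=h_0+\cdots+h_{2n-k}x^{2n-k}$, $h^*(x)=\frac{1}{h_{2n-k}}x^{2n-k}h(1/x)$, $V_{h^*(x)}\in\mathbb{F}_q^{2n}$ its coefficient vector, and $W_{h^{\epsilon}(x)}=\Psi^{-1}(\tau(V_{h^*(x)}))\in\mathbb{F}_{q^2}^n$. Then the $k$ vectors $W_{h^{\epsilon}(x)},T(W_{h^{\epsilon}(x)}),\ldots,T^{k-1}(W_{h^{\epsilon}(x)})$ form an $\mathbb{F}_q$-basis of the alternating dual $\mathscr{C}^{\perp_a}$.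
   Context: $\sigma(v_0,\ldots,v_{2n-1})=(v_{2n-1},v_0,\ldots,v_{2n-2})$, $\tau(v_0,\ldots,v_{2n-1})=(-v_n,\ldots,-v_{2n-1},v_0,\ldots,v_{n-1})$, and $T(c_0,\ldots,c_{n-1})=(c_{n-1}^q,c_0,\ldots,c_{n-2})$. The alternating inner product on $\mathbb{F}_{q^2}^n$ is $\langle u,v\rangle_a=(\beta^{2q}-\beta^2)\sum_{i=0}^{n-1}(u_iv_i^q-u_i^qv_i)$ and $\mathscr{C}^{\perp_a}=\{v\in\mathbb{F}_{q^2}^n:\langle u,v\rangle_a=0\ \forall u\in\mathscr{C}\}$. *)

(* Defs.v *)
From mathcomp Require Import all_boot all_order all_algebra all_field.
Set Implicit Arguments. Unset Strict Implicit. Unset Printing Implicit Defensive.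
Import GRing.Theory.
Local Open Scope ring_scope.

Section Defs.
Variable F : finFieldType.   (* plays the role of F_{q^2} *)
Variable q : nat.

Definition Fq : {pred F} := fun x => x ^+ q == x.

Definition Tr (x : F) : F := x + x ^+ q.

Definition Psi (beta : F) (n : nat) (a : 'rV[F]_n) : 'rV[F]_(n + n) :=
  row_mx (\row_j Tr (beta * a 0 j)) (\row_j Tr (beta ^+ q * a 0 j)).

Definition tau (n : nat) (v : 'rV[F]_(n + n)) : 'rV[F]_(n + n) :=
  row_mx (- rsubmx v) (lsubmx v).

Definition Tmap (n : nat) (c : 'rV[F]_n) : 'rV[F]_n :=
  \row_(i < n) (if (i : nat) == 0%N then (c 0 (ord_pred i)) ^+ q
                else c 0 (ord_pred i)).
(* ord_pred i is the cyclic predecessor: n-1 for i = 0, i-1 otherwise *)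

Definition cyclic_code (N : nat) (g : {poly F}) (c : 'rV[F]_N) : Prop :=
  (forall i, c 0 i \in Fq) /\
  exists a : {poly F}, a \is a polyOver Fq /\
    rVpoly c = (a * g) %% ('X^N - 1).

Definition alt_ip (beta : F) (n : nat) (u v : 'rV[F]_n) : F :=
  (beta ^+ (2 * q) - beta ^+ 2) *
  \sum_(i < n) (u 0 i * v 0 i ^+ q - u 0 i ^+ q * v 0 i).

Definition alt_dual (beta : F) (n : nat) (C : 'rV[F]_n -> Prop) (v : 'rV[F]_n) : Prop :=
  forall u, C u -> alt_ip beta u v = 0.

Definition recip (h : {poly F}) : {poly F} :=
  (lead_coef h)^-1 *: \poly_(i < size h) h`_((size h).-1 - i).

Definition Fq_basis (n k : nat) (w : 'I_k -> 'rV[F]_n) (P : 'rV[F]_n -> Prop) : Prop :=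
  (forall a : 'I_k -> F, (forall i, a i \in Fq) ->
      \sum_(i < k) a i *: w i = 0 -> forall i, a i = 0) /\
  (forall v, P v <-> exists a : 'I_k -> F, (forall i, a i \in Fq) /\
                       v = \sum_(i < k) a i *: w i).
End Defs.

(* Main.v *)
From HB Require Import structures.
Require Import Defs.
From mathcomp Require Import all_boot all_order all_algebra all_field.
From mathcomp Require Import zify ring.
Import GRing.Theory.
Local Open Scope ring_scope.

Section FrobMorph.
Variables (F : finFieldType) (q : nat).
Definition frob_hyp := (0 < q)%N /\ (forall x y : F, (x + y) ^+ q = x ^+ q + y ^+ q).
Definition frobq (H : frob_hyp) (x : F) := x ^+ q.
Variable H : frob_hyp.
Lemma frobq_zmod : zmod_morphism (frobq H).
Proof.
have N : forall y : F, (- y) ^+ q = - (y ^+ q).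
  move=> y; apply/eqP; rewrite -addr_eq0 addrC -(proj2 H) subrr expr0n.
  by rewrite eqn0Ngt (proj1 H).
by move=> x y; rewrite /frobq (proj2 H) N.
Qed.
Lemma frobq_monoid : monoid_morphism (frobq H).
Proof. by split; [rewrite /frobq expr1n | move=> x y; rewrite /frobq exprMn]. Qed.
HB.instance Definition _ := GRing.isZmodMorphism.Build F F (frobq H) frobq_zmod.
HB.instance Definition _ := GRing.isMonoidMorphism.Build F F (frobq H) frobq_monoid.
End FrobMorph.

Section Basic.
Variable F : finFieldType.
Variables (q m : nat).
Hypothesis hq : q = (2 ^ m)%N.
Hypothesis hF : #|F| = (q ^ 2)%N.

Lemma ch2 : 2 \in [pchar F].
Proof. apply: (@card_finPcharP _ _ (m*2)%N) => //. by rewrite hF hq -expnM. Qed.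

Lemma two0 (x : F) : x + x = 0.
Proof. exact: (addrr_pchar2 ch2). Qed.

Lemma oppF (x : F) : - x = x.
Proof. exact: (oppr_pchar2 ch2). Qed.

Lemma frobD_gen e (x y : F) : (x+y)^+(2^e) = x^+(2^e) + y^+(2^e).
Proof.
elim: e => [|e IH]; first by rewrite expn0 !expr1.
by rewrite expnSr !exprM IH sqrrD mulr2n two0 addr0.
Qed.

Lemma frobD (x y : F) : (x+y)^+q = x^+q + y^+q.
Proof. by rewrite hq frobD_gen. Qed.

Lemma q_gt1 : (1 < q)%N.
Proof.
have := finNzRing_gt1 F; rewrite hF hq.
case: m => [|m']; first by rewrite expn0 exp1n.
move=> _; rewrite expnS; have := expn_gt0 2 m'; move: (2^m')%N => p; lia.
Qed.

Lemma q_gt0 : (0 < q)%N.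
Proof. exact: ltnW q_gt1. Qed.

Lemma frob0 : (0 : F) ^+ q = 0.
Proof. by rewrite expr0n eqn0Ngt q_gt0. Qed.

Local Notation FQ := (@Fq F q).

Lemma frobK (x : F) : x ^+ q ^+ q = x.
Proof. by rewrite -exprM mulnn -hF expf_card. Qed.

Lemma frobM (x y : F) : (x * y) ^+ q = x ^+ q * y ^+ q.
Proof. exact: exprMn. Qed.

Lemma frobV (x : F) : (x^-1) ^+ q = (x ^+ q)^-1.
Proof. by rewrite exprVn. Qed.

Lemma frob_sum I (r : seq I) (P : pred I) (f : I -> F) :
  (\sum_(i <- r | P i) f i) ^+ q = \sum_(i <- r | P i) (f i) ^+ q.
Proof. exact: (big_morph (fun x => x ^+ q) frobD frob0). Qed.

Lemma FqE (x : F) : (x \in FQ) = (x ^+ q == x).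
Proof. by []. Qed.

Lemma FqD x y : x \in FQ -> y \in FQ -> x + y \in FQ.
Proof. by rewrite !FqE frobD => /eqP -> /eqP ->. Qed.

Lemma FqM x y : x \in FQ -> y \in FQ -> x * y \in FQ.
Proof. by rewrite !FqE frobM => /eqP -> /eqP ->. Qed.

Lemma FqV x : x \in FQ -> x^-1 \in FQ.
Proof. by rewrite !FqE frobV => /eqP ->. Qed.

Lemma Fq0 : 0 \in FQ.
Proof. by rewrite FqE frob0. Qed.

Lemma FqN x : x \in FQ -> - x \in FQ.
Proof. by rewrite oppF. Qed.

Lemma Fq_sum I (r : seq I) (P : pred I) (f : I -> F) :
  (forall i, P i -> f i \in FQ) -> \sum_(i <- r | P i) f i \in FQ.
Proof.
move=> H; elim/big_rec: _ => [|i x Pi Hx]; first exact: Fq0.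
exact: FqD (H i Pi) Hx.
Qed.

Lemma TrE x : @Tr F q x = x + x ^+ q.
Proof. by []. Qed.

Lemma Tr_Fq x : @Tr F q x \in FQ.
Proof. by rewrite FqE TrE frobD frobK addrC. Qed.

Lemma TrD x y : @Tr F q (x + y) = @Tr F q x + @Tr F q y.
Proof. by rewrite !TrE frobD addrACA. Qed.

Lemma TrZ a x : a \in FQ -> @Tr F q (a * x) = a * @Tr F q x.
Proof. by rewrite FqE !TrE frobM => /eqP ->; rewrite mulrDr. Qed.

Lemma Tr_frob x : @Tr F q (x ^+ q) = @Tr F q x.
Proof. by rewrite !TrE frobK addrC. Qed.

Lemma Tr_sum I (r : seq I) (P : pred I) (f : I -> F) :
  @Tr F q (\sum_(i <- r | P i) f i) = \sum_(i <- r | P i) @Tr F q (f i).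
Proof. apply: (big_morph (@Tr F q) TrD). by rewrite TrE frob0 addr0. Qed.

Variable beta : F.
Hypothesis hbeta : (q ^ 2 - 1)%N.-primitive_root beta.

Local Notation B := (beta ^+ q).

Lemma beta_nFq : B != beta.
Proof.
apply/eqP => Hb.
have hpos : (0 < q ^ 2 - 1)%N.
  have := q_gt1; rewrite -mulnn; move: q => q' ?; nia.
have b0 : beta != 0.
  apply/eqP => b0; have := prim_expr_order hbeta; rewrite b0 expr0n.
  by rewrite eqn0Ngt hpos /= => /eqP; rewrite eq_sym oner_eq0.
have : beta ^+ (q - 1) == 1.
  have := Hb; rewrite -{1}(subnK (ltnW q_gt1)) exprD expr1 => H.
  by apply/eqP; apply: (mulIf b0); rewrite H mul1r.
rewrite -(prim_order_dvd hbeta) => /dvdn_leq.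
have := q_gt1; move: q => q'; rewrite -subn_gt0 => H.
rewrite -mulnn in hpos *; nia.
Qed.

Lemma beta_neq0 : beta != 0.
Proof. by apply: contraNneq beta_nFq => ->; rewrite frob0. Qed.

Local Notation t := (beta + B).

Lemma t_neq0 : t != 0.
Proof.
apply: contraNneq beta_nFq => H.
by move/eqP: H; rewrite addrC addr_eq0 oppF.
Qed.

Lemma tsq : t ^+ 2 = beta ^+ 2 + B ^+ 2.
Proof. by rewrite sqrrD mulr2n two0 addr0. Qed.

Lemma tsq_neq0 : beta ^+ 2 + B ^+ 2 != 0.
Proof. by rewrite -tsq expf_neq0 // t_neq0. Qed.

Lemma inv2 a b : a \in FQ -> b \in FQ ->
  let w := (a * beta + b * B) / (beta ^+ 2 + B ^+ 2) in
  @Tr F q (beta * w) = a /\ @Tr F q (B * w) = b.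
Proof.
rewrite !FqE => /eqP ha /eqP hb w.
have wq : w ^+ q = (a * B + b * beta) / (beta ^+ 2 + B ^+ 2).
  rewrite /w frobM frobV !frobD !frobM ha hb frobK.
  by rewrite !expr2 (addrC (B * B)).
have wd : w = (a * beta + b * B) / (beta ^+ 2 + B ^+ 2) by [].
clearbody w.
rewrite !TrE !frobM wq frobK wd !mulrA -!mulrDl.
split; apply: (mulIf tsq_neq0); rewrite mulfVK ?tsq_neq0 //.
  have -> : beta * (a * beta + b * B) + B * (a * B + b * beta) =
     a * (beta ^+ 2 + B ^+ 2) + (b * beta * B + b * beta * B) by ring.
  by rewrite two0 addr0 mulrC.
have -> : B * (a * beta + b * B) + beta * (a * B + b * beta) =
   b * (beta ^+ 2 + B ^+ 2) + (a * beta * B + a * beta * B) by ring.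
by rewrite two0 addr0 mulrC.
Qed.

Lemma recover w :
  w = (@Tr F q (beta * w) * beta + @Tr F q (B * w) * B) / (beta ^+ 2 + B ^+ 2).
Proof.
apply: (mulIf tsq_neq0); rewrite mulfVK ?tsq_neq0 // !TrE !frobM frobK.
have -> : (beta * w + B * w ^+ q) * beta + (B * w + beta * w ^+ q) * B =
  w * (beta ^+ 2 + B ^+ 2) + (beta * B * w ^+ q + beta * B * w ^+ q) by ring.
by rewrite two0 addr0.
Qed.

Lemma alt_term u v :
  (beta ^+ (2 * q) - beta ^+ 2) * (u * v ^+ q - u ^+ q * v) =
  @Tr F q (beta * u) * @Tr F q (B * v) + @Tr F q (B * u) * @Tr F q (beta * v).
Proof.
rewrite !TrE !frobM frobK mulnC exprM.
set U := u ^+ q; set V := v ^+ q; rewrite !oppF.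
have -> : (B ^+ 2 + beta ^+ 2) * (u * V + U * v) =
  (beta * u + B * U) * (B * v + beta * V) + (B * u + beta * U) * (beta * v + B * V)
  + (- (beta * B * (u * v + U * V)) + - (beta * B * (u * v + U * V))) by ring.
by rewrite two0 addr0.
Qed.


Variable n : nat.
Hypothesis hn : (0 < n)%N.

Definition rep (w : 'rV[F]_n) (p : {poly F}) :=
  forall j : 'I_n, @Tr F q (beta * w 0 j) = p`_(n + j) /\ @Tr F q (B * w 0 j) = p`_j.

Lemma rep_inj (w w' : 'rV[F]_n) (p : {poly F}) : rep w p -> rep w' p -> w = w'.
Proof.
move=> H H'; apply/rowP => j.
rewrite (recover (w 0 j)) (recover (w' 0 j)).
by have [-> ->] := H j; have [-> ->] := H' j.
Qed.

Lemma rep_coef (w : 'rV[F]_n) (p p2 : {poly F}) : rep w p -> rep w p2 -> forall l, (l < n + n)%N -> p`_l = p2`_l.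
Proof.
move=> H H' l hl; case: (ltnP l n) => hln.
  by have [_ <-] := H (Ordinal hln); have [_ <-] := H' (Ordinal hln).
have hj : (l - n < n)%N by lia.
have -> : l = (n + (l - n))%N by lia.
by have [<- _] := H (Ordinal hj); have [<- _] := H' (Ordinal hj).
Qed.

Lemma rep_exists (p : {poly F}) : (forall l, (l < n + n)%N -> p`_l \in FQ) -> exists w, rep w p.
Proof.
move=> H; exists (\row_j ((p`_(n + j) * beta + p`_j * B) / (beta ^+ 2 + B ^+ 2))).
move=> j; rewrite mxE.
have h1 : p`_(n + j) \in FQ by apply: H; have := ltn_ord j; lia.
have h2 : p`_j \in FQ by apply: H; have := ltn_ord j; lia.
exact: inv2 h1 h2.
Qed.

Lemma rep_lin k (a : 'I_k -> F) (w : 'I_k -> 'rV[F]_n) (p : 'I_k -> {poly F}) :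
  (forall i, a i \in FQ) -> (forall i, rep (w i) (p i)) ->
  rep (\sum_(i < k) a i *: w i) (\sum_(i < k) a i *: p i).
Proof.
move=> Ha H j; rewrite summxE !coef_sum !mulr_sumr !Tr_sum.
split; apply: eq_bigr => i _; rewrite mxE coefZ mulrCA TrZ //.
  by have [-> _] := H i j.
by have [_ ->] := H i j.
Qed.

Lemma ord_pred_val (j : 'I_n) : (ord_pred j : nat) = if (j : nat) == 0%N then n.-1 else (j : nat).-1.
Proof.
rewrite /=; case: eqP => [->|hj]; first by rewrite add0n modn_small // prednK // leqnn.
have -> : ((j + n).-1 = (j : nat).-1 + n)%N by lia.
by rewrite modnDr modn_small //; have := ltn_ord j; lia.
Qed.

Lemma rep_T (w : 'rV[F]_n) (p : {poly F}) : rep w p -> p`_(n + n).-1 = 0 -> rep (Tmap q w) ('X * p).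
Proof.
move=> H hp j; rewrite mxE !coefXM.
have e1 : (n + j == 0)%N = false by lia.
rewrite e1.
move: (ord_pred j) (ord_pred_val j) => j' hj'.
have [h1 h2] := H j'.
case: eqP => [hj0|hj0].
  rewrite hj0 /= in hj'.
  have -> : (n + j).-1 = (j' : nat) by rewrite hj' hj0; lia.
  split.
    by rewrite -h2 -[RHS]Tr_frob frobM frobK.
  rewrite -hp.
  have -> : ((n + n).-1 = n + j')%N by rewrite hj'; lia.
  by rewrite -h1 -[RHS]Tr_frob frobM.
have hj2 : (j == 0 :> nat) = false by apply/eqP.
rewrite hj2 in hj'.
have -> : (n + j).-1 = (n + j')%N by rewrite hj'; lia.
have -> : (j : nat).-1 = (j' : nat) by rewrite hj'.
by split.
Qed.

Lemma PsiL (u : 'rV[F]_n) (j : 'I_n) : Psi q beta u 0 (lshift n j) = @Tr F q (beta * u 0 j).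
Proof. by rewrite /Psi row_mxEl mxE. Qed.

Lemma PsiR (u : 'rV[F]_n) (j : 'I_n) : Psi q beta u 0 (rshift n j) = @Tr F q (B * u 0 j).
Proof. by rewrite /Psi row_mxEr mxE. Qed.

Lemma Psi_Fq (u : 'rV[F]_n) l : Psi q beta u 0 l \in FQ.
Proof.
case: (splitP l) => j hj.
  have -> : l = lshift n j by apply: val_inj.
  by rewrite PsiL Tr_Fq.
have -> : l = rshift n j by apply: val_inj.
by rewrite PsiR Tr_Fq.
Qed.

Lemma alt_rep (u v : 'rV[F]_n) (p : {poly F}) : rep v p ->
  alt_ip q beta u v = \sum_(l < n + n) Psi q beta u 0 l * p`_l.
Proof.
move=> H; rewrite /alt_ip mulr_sumr big_split_ord /= -big_split /=.
apply: eq_bigr => j _; rewrite alt_term PsiL PsiR.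
by have [-> ->] := H j; rewrite addrC.
Qed.

Lemma Psi_exists (x : 'rV[F]_(n + n)) : (forall l, x 0 l \in FQ) -> exists u, Psi q beta u = x.
Proof.
move=> Hx.
exists (\row_j ((x 0 (lshift n j) * beta + x 0 (rshift n j) * B) / (beta ^+ 2 + B ^+ 2))).
apply/rowP => l; case: (splitP l) => j hj.
  have -> : l = lshift n j by apply: val_inj.
  by rewrite PsiL mxE; have [-> _] := inv2 _ _ (Hx (lshift n j)) (Hx (rshift n j)).
have -> : l = rshift n j by apply: val_inj.
by rewrite PsiR mxE; have [_ ->] := inv2 _ _ (Hx (lshift n j)) (Hx (rshift n j)).
Qed.

Lemma rep_Psi (w : 'rV[F]_n) (V : 'rV[F]_(n + n)) (p : {poly F}) :
  (forall l : 'I_(n + n), V 0 l = p`_l) -> (Psi q beta w = tau V <-> rep w p).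
Proof.
move=> HV; split.
  move=> H j; split.
    have := congr1 (fun M : 'M[F]_(1, n + n) => M 0 (lshift n j)) H.
    by rewrite /= PsiL /tau row_mxEl !mxE oppF HV.
  have := congr1 (fun M : 'M[F]_(1, n + n) => M 0 (rshift n j)) H.
  by rewrite /= PsiR /tau row_mxEr !mxE HV.
move=> H; apply/rowP => l; case: (splitP l) => j hj.
  have -> : l = lshift n j by apply: val_inj.
  by rewrite PsiL /tau row_mxEl !mxE oppF HV; have [-> _] := H j.
have -> : l = rshift n j by apply: val_inj.
by rewrite PsiR /tau row_mxEr !mxE HV; have [_ ->] := H j.
Qed.

Lemma frobH : frob_hyp F q.
Proof. exact: (conj q_gt0 frobD). Qed.

Local Notation fr := (frobq F q frobH).

Lemma polyFq_map (p : {poly F}) : (forall l, p`_l \in FQ) -> map_poly fr p = p.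
Proof. by move=> H; apply/polyP => l; rewrite coef_map /frobq; apply/eqP; apply: H. Qed.

Lemma map_Fq (p : {poly F}) : map_poly fr p = p -> forall l, p`_l \in FQ.
Proof. by move=> H l; rewrite FqE -{2}H coef_map. Qed.

Lemma tauK (x : 'rV[F]_(n + n)) : tau (tau x) = x.
Proof.
rewrite /tau row_mxKr row_mxKl; apply/rowP => l; case: (splitP l) => j hj.
  have -> : l = lshift n j by apply: val_inj.
  by rewrite row_mxEl !mxE oppF.
have -> : l = rshift n j by apply: val_inj.
by rewrite row_mxEr !mxE oppF.
Qed.

Lemma rep_any (v : 'rV[F]_n) :
  exists Y : {poly F}, [/\ rep v Y, (size Y <= n + n)%N & forall l, Y`_l \in FQ].
Proof.
exists (rVpoly (tau (Psi q beta v))); split.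
- apply/(@rep_Psi v (tau (Psi q beta v))); last by rewrite tauK.
  by move=> l; rewrite coef_rVpoly_ord.
- exact: size_poly.
- move=> l; rewrite coef_rVpoly; case: insub => [i|]; last exact: Fq0.
  rewrite /tau; case: (splitP i) => j hj.
    have -> : i = lshift n j by apply: val_inj.
    by rewrite row_mxEl mxE; apply: FqN; rewrite mxE; apply: Psi_Fq.
  have -> : i = rshift n j by apply: val_inj.
  by rewrite row_mxEr mxE; apply: Psi_Fq.
Qed.

Lemma polyOver_coef (p : {poly F}) : p \is a polyOver FQ -> forall i, p`_i \in FQ.
Proof.
move=> /(all_nthP 0) H i; case: (ltnP i (size p)) => hi; first exact: H.
by rewrite nth_default //; exact: Fq0.
Qed.

Lemma coef_polyOver (p : {poly F}) : (forall i, p`_i \in FQ) -> p \is a polyOver FQ.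
Proof. by move=> H; apply/(all_nthP 0) => i _; apply: H. Qed.

Variable g : {poly F}.
Hypothesis hgF : g \is a polyOver FQ.
Hypothesis hgmon : g \is monic.
Hypothesis hgdiv : g %| 'X^(n + n) - 1.

Local Notation N := (n + n)%N.
Local Notation k := (size g).-1.
Local Notation h := (('X^N - 1) %/ g).
Local Notation hs := (recip h).

Lemma hN : (0 < N)%N.
Proof. lia. Qed.

Lemma hXN : h * g = 'X^N - 1.
Proof. exact: divpK. Qed.

Lemma size_g : size g = k.+1.
Proof. by rewrite prednK // size_poly_gt0 monic_neq0. Qed.

Lemma k_le : (k <= N)%N.
Proof.
have H : 'X^N - 1 != 0 :> {poly F} by rewrite -size_poly_eq0 size_Xn_sub_1 ?hN.
by have := dvdp_leq H hgdiv; rewrite size_Xn_sub_1 ?hN // size_g ltnS.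
Qed.

Lemma size_h : size h = (N - k).+1.
Proof.
rewrite size_divp ?monic_neq0 // size_Xn_sub_1 ?hN //.
have := k_le; move: (size g).-1 => k'; lia.
Qed.

Lemma h_monic : h \is monic.
Proof. by rewrite -(monicMr h hgmon) hXN monic_Xn_sub_1 // hN. Qed.

Lemma coef0_hg : h`_0 * g`_0 = -1.
Proof.
have := congr1 (fun p : {poly F} => p`_0) hXN.
rewrite /= coefM big_ord1 coefB coefXn coef1 => ->.
by have := hN; case: N => // N' _; rewrite sub0r.
Qed.

Lemma g0_neq0 : g`_0 != 0.
Proof.
apply/eqP => H; have := coef0_hg; rewrite H mulr0 => /eqP.
by rewrite eq_sym oppr_eq0 oner_eq0.
Qed.

Lemma h0_neq0 : h`_0 != 0.
Proof.
apply/eqP => H; have := coef0_hg; rewrite H mul0r => /eqP.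
by rewrite eq_sym oppr_eq0 oner_eq0.
Qed.

Lemma hs_coef l : hs`_l = if (l < (N - k).+1)%N then h`_((N - k) - l) else 0.
Proof. by rewrite /recip (monicP h_monic) invr1 scale1r coef_poly size_h. Qed.

Lemma size_hs : size hs = (N - k).+1.
Proof.
rewrite /recip (monicP h_monic) invr1 scale1r size_poly_eq.
  exact: size_h.
by rewrite subnn h0_neq0.
Qed.

Lemma hs_neq0 : hs != 0.
Proof. by rewrite -size_poly_eq0 size_hs. Qed.

Lemma h_Fq l : h`_l \in FQ.
Proof.
apply: map_Fq; rewrite map_divp rmorphB /= map_polyXn rmorph1.
by rewrite [map_poly _ g]polyFq_map // ; apply: polyOver_coef.
Qed.

Lemma hs_Fq l : hs`_l \in FQ.
Proof. rewrite hs_coef; case: ifP => _; [exact: h_Fq | exact: Fq0]. Qed.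

Lemma rep_iter W : rep W hs -> forall i, (i < k)%N -> rep (iter i (@Tmap F q n) W) ('X^i * hs).
Proof.
move=> HW; elim=> [|i IH] hi; first by rewrite /= expr0 mul1r.
rewrite iterS exprS -mulrA; apply: rep_T; first exact: IH (ltnW hi).
rewrite coefXnM hs_coef.
have := k_le; move: hi; move: (size g).-1 => k' hi hk.
case: ltnP => h1 //; case: ltnP => h2 //; lia.
Qed.

Lemma pair0 (f : {poly F}) i : g %| f -> (size f <= N)%N -> (i < k)%N ->
  \sum_(l < N) f`_l * ('X^i * hs)`_l = 0.
Proof.
move=> gf sf ik.
have hk := k_le.
have e : forall l : 'I_N, ('X^i * hs)`_l = ('X^(k.-1 - i) * h)`_(N.-1 - l).
  move=> l; rewrite !coefXnM hs_coef.
  have hl := ltn_ord l.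
  have hsz : forall t, (N - k < t)%N -> h`_t = 0.
    by move=> t ht; rewrite nth_default // size_h.
  move: hsz ik hk hl; move: (size g).-1 => k' hsz ik hk hl.
  case: (ltnP l i) => li.
    case: ltnP => // c; rewrite hsz //; lia.
  case: ltnP => c.
    have -> : (N.-1 - l < k'.-1 - i)%N = false by apply/negbTE; rewrite -leqNgt; lia.
    congr (h`_ _); lia.
  case: ltnP => // c2; lia.
have -> : \sum_(l < N) f`_l * ('X^i * hs)`_l = (f * ('X^(k.-1 - i) * h))`_N.-1.
  rewrite coefM prednK ?hN //; apply: eq_bigr => l _; by rewrite e.
have [c ec] : exists c, f = c * g by exists (f %/ g); rewrite divpK.
rewrite ec in sf *.
have -> : c * g * ('X^(k.-1 - i) * h) = c * 'X^(k.-1 - i + N) - c * 'X^(k.-1 - i).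
  move: hXN; move: h => hh eH.
  rewrite exprD (_ : 'X^N = hh * g + 1); last by rewrite eH subrK.
  ring.
rewrite coefB !coefMXn.
have -> : (N.-1 < k.-1 - i + N)%N = true by apply/idP; have := hN; lia.
case: ltnP => _; first by rewrite subr0.
have sc : (size c <= N - k)%N.
  have [->|cn0] := eqVneq c 0; first by rewrite size_poly0.
  move: sf; rewrite size_Mmonic // size_g.
  by move: (size c) => sc; lia.
rewrite (nth_default 0 (_ : size c <= _)%N) ?subr0 //.
move: sc ik hk; move: (size c) (size g).-1 => sc k' H1 H2 H3; lia.
Qed.

Lemma pair0A (f A : {poly F}) : g %| f -> (size f <= N)%N -> (size A <= k)%N ->
  \sum_(l < N) f`_l * (A * hs)`_l = 0.
Proof.
move=> gf sf sA.
have eA : A = \poly_(i < k) A`_i.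
  apply/polyP => l; rewrite coef_poly; case: ltnP => // hl.
  by rewrite nth_default //; apply: leq_trans sA hl.
rewrite eA poly_def mulr_suml.
under eq_bigr => l _ do rewrite coef_sum mulr_sumr.
rewrite exchange_big /= big1 // => i _.
under eq_bigr => l _ do rewrite -scalerAl coefZ mulrCA.
by rewrite -mulr_sumr pair0 ?mulr0.
Qed.

Lemma Rm0 (R : {poly F}) : (size R <= N - k)%N ->
  (forall j, (j < N - k)%N -> \sum_(l < N) ('X^j * g)`_l * R`_l = 0) -> R = 0.
Proof.
move=> sR HR.
have key : forall d l, (N - k <= l + d)%N -> R`_l = 0.
  elim=> [|d IH] l hl.
    by rewrite nth_default //; apply: leq_trans sR _; rewrite addn0 in hl.
  case: (leqP (N - k) (l + d)) => hld; first exact: IH.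
  have hlN : (l < N)%N by lia.
  have := HR l (ltac:(lia)).
  rewrite (bigD1 (Ordinal hlN)) //= big1 ?addr0.
    rewrite coefXnM ltnn subnn => /eqP; rewrite mulf_eq0 (negbTE g0_neq0) /=.
    by move/eqP.
  move=> l' hl'; rewrite coefXnM; case: ltnP => hl'l; first by rewrite mul0r.
  have hne : (l' : nat) <> l by move=> E; move/eqP: hl'; apply; apply: val_inj.
  rewrite IH ?mulr0 //; lia.
apply/polyP => l; rewrite coef0; exact: (key (N - k)%N l (leq_addl _ _)).
Qed.

Lemma sumXhs (a : 'I_k -> F) :
  \sum_(i < k) a i *: ('X^i * hs) = (\sum_(i < k) a i *: 'X^i) * hs.
Proof. by rewrite mulr_suml; apply: eq_bigr => i _; rewrite scalerAl. Qed.

Lemma size_sumX (a : 'I_k -> F) : (size (\sum_(i < k) a i *: 'X^i)%R <= k)%N.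
Proof.
apply: (big_ind (fun p : {poly F} => (size p <= k)%N)).
- by rewrite size_poly0.
- by move=> p1 p2 h1 h2; rewrite (leq_trans (size_polyD _ _)) // geq_max h1 h2.
- by move=> i _; rewrite (leq_trans (size_scale_leq _ _)) // size_polyXn.
Qed.

Lemma coef_sumX (a : 'I_k -> F) (i : 'I_k) : (\sum_(j < k) a j *: 'X^j)`_i = a i.
Proof.
rewrite coef_sum (bigD1 i) //= coefZ coefXn eqxx mulr1 big1 ?addr0 // => j hj.
have hne : (i : nat) != j by rewrite eq_sym.
by rewrite coefZ coefXn (negbTE hne) mulr0.
Qed.

Lemma polyE_k (A : {poly F}) : (size A <= k)%N -> A = \sum_(i < k) A`_i *: 'X^i.
Proof.
move=> sA; rewrite -poly_def; apply/polyP => l; rewrite coef_poly.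
case: ltnP => // hl; rewrite nth_default //; exact: leq_trans sA hl.
Qed.

Lemma rep0 : rep 0 0.
Proof. by move=> j; rewrite !mxE !mulr0 TrE frob0 addr0 !coef0. Qed.

Lemma main_thm :
  let k := (size g).-1 in
  let h := ('X^(n + n) - 1) %/ g in
  let V : 'rV[F]_(n + n) := \row_(i < n + n) (recip h)`_i in
  let C := fun a : 'rV[F]_n => cyclic_code q g (Psi q beta a) in
  (exists W : 'rV[F]_n, Psi q beta W = tau V) /\
  (forall W : 'rV[F]_n, Psi q beta W = tau V ->
     Fq_basis q (fun i : 'I_k => iter i (@Tmap F q n) W) (alt_dual q beta C)).
Proof.
move=> k0 h0 V C.
have HV : forall l : 'I_(n + n), V 0 l = hs`_l by move=> l; rewrite mxE.
split.
  have [W HW] := rep_exists hs (fun l _ => hs_Fq l).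
  by exists W; apply/(rep_Psi _ _ _ HV).
move=> W /(rep_Psi _ _ _ HV) HW.
have Hit := rep_iter _ HW.
have Hlin : forall a : 'I_k -> F, (forall i, a i \in FQ) ->
    rep (\sum_(i < k) a i *: iter i (@Tmap F q n) W) ((\sum_(i < k) a i *: 'X^i) * hs).
  move=> a Ha; rewrite -sumXhs; apply: rep_lin => // i; exact: Hit.
split.
  move=> a Ha Hs i.
  have R1 := Hlin a Ha; rewrite /= Hs in R1.
  have Hc := rep_coef _ _ _ R1 rep0.
  set A := \sum_(j < k) a j *: 'X^j in R1 Hc.
  have sP : (size (A * hs)%R <= N)%N.
    rewrite (leq_trans (size_polyMleq _ _)) // size_hs.
    have := size_sumX a; rewrite -/A; have := k_le.
    move: (size A) (size g).-1 => sA k' ? ?; lia.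
  have P0 : A * hs = 0.
    apply/polyP => l; rewrite coef0; case: (ltnP l N) => hl; first by rewrite Hc // coef0.
    by rewrite nth_default //; apply: leq_trans sP hl.
  have : A = 0 by move/eqP: P0; rewrite mulf_eq0 (negbTE hs_neq0) orbF => /eqP.
  by move/(congr1 (fun p : {poly F} => p`_i)); rewrite coef_sumX coef0.
move=> v; split.
  move=> Hv.
  have [Y [HY sY FY]] := rep_any v.
  have sA : (size (Y %/ hs)%R <= k)%N.
    rewrite size_divp ?hs_neq0 // size_hs /=.
    have := k_le; move: sY; move: (size Y) (size g).-1 => sy k' ? ?; lia.
  have FA : forall l, (Y %/ hs)`_l \in FQ.
    apply: map_Fq; rewrite map_divp !polyFq_map //; exact: hs_Fq.
  have orthY : forall j, (j < N - k)%N -> \sum_(l < N) ('X^j * g)`_l * Y`_l = 0.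
    move=> j hj.
    have sXg : (size ('X^j * g)%R <= N)%N.
      rewrite size_monicM ?monicXn ?monic_neq0 // size_polyXn size_g.
      move: hj; move: (size g).-1 => k'; lia.
    have FXg : forall l, ('X^j * g)`_l \in FQ.
      move=> l; rewrite coefXnM; case: ifP => _; [exact: Fq0 | exact: polyOver_coef].
    have [u Hu] := @Psi_exists (poly_rV ('X^j * g)) (fun l => (ltac:(rewrite mxE; exact: FXg))).
    have Cu : C u.
      split; first by move=> l; rewrite Hu mxE.
      exists 'X^j; split.
        apply: coef_polyOver => l; rewrite coefXn; case: eqP => _ /=.
          by rewrite FqE expr1n.
        exact: Fq0.
      rewrite Hu poly_rV_K // modp_small // size_Xn_sub_1 ?hN //.
    apply: etrans (Hv u Cu); rewrite (alt_rep u _ _ HY) Hu.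
    by apply: eq_bigr => l _; rewrite mxE.
  set A := Y %/ hs.
  have eY : Y = A * hs + Y %% hs by rewrite /A -divp_eq.
  have sR : (size (Y %% hs)%R <= N - k)%N.
    have := ltn_modp Y hs; rewrite hs_neq0 size_hs ltnS; by apply.
  have R0 : Y %% hs = 0.
    apply: Rm0 => // j hj.
    have -> : Y %% hs = Y - A * hs by rewrite {2}eY addrAC subrr add0r.
    under eq_bigr => l _ do rewrite coefB mulrBr.
    rewrite sumrB orthY // pair0A ?subr0 //.
      exact: dvdp_mull.
    rewrite size_monicM ?monicXn ?monic_neq0 // size_polyXn size_g.
    move: hj; move: (size g).-1 => k'; lia.
  rewrite R0 addr0 in eY.
  move: eY sA FA; rewrite -/A; clearbody A => eY sA FA.
  exists (fun i : 'I_k => A`_i); split; first by move=> i; apply: FA.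
  apply: (rep_inj _ _ _ HY); rewrite eY [in X in rep _ X](polyE_k _ sA).
  by apply: Hlin => i; apply: FA.
move=> [a [Ha ->]] u [_ [a' [_ Hf]]].
rewrite (alt_rep u _ _ (Hlin a Ha)).
under eq_bigr => l _ do rewrite -coef_rVpoly_ord.
apply: pair0A; last exact: size_sumX.
  by rewrite Hf -dvdp_mod // dvdp_mulIr.
exact: size_poly.
Qed.

End Basic.

Theorem theorem4p6 (F : finFieldType) (q m : nat) (beta : F) (n : nat)
    (g : {poly F})
    (hq : q = (2 ^ m)%N) (hF : #|F| = (q ^ 2)%N)
    (hbeta : (q ^ 2 - 1)%N.-primitive_root beta)
    (hn : (0 < n)%N)
    (hgF : g \is a polyOver (Fq q)) (hgmon : g \is monic)
    (hgdiv : g %| 'X^(n + n) - 1) (hgne : g != 'X^(n + n) - 1) :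
  let k := (size g).-1 in
  let h := ('X^(n + n) - 1) %/ g in
  let V : 'rV[F]_(n + n) := \row_(i < n + n) (recip h)`_i in
  let C := fun a : 'rV[F]_n => cyclic_code q g (Psi q beta a) in
  (exists W : 'rV[F]_n, Psi q beta W = tau V) /\
  (forall W : 'rV[F]_n, Psi q beta W = tau V ->
     Fq_basis q (fun i : 'I_k => iter i (@Tmap F q n) W) (alt_dual q beta C)).
Proof.
exact: (main_thm _ _ _ hq hF _ hbeta _ hn _ hgF hgmon hgdiv).
Qed.
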